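(* Let $(X,d)$ be a quasi-pseudometric space and $f:X\to\mathbb{R}\cup\{\infty\}$ a function. 1. $f$ is nearly lower semicontinuous at $x\in X$ if and only if $f(x)\le\liminf_{n\to\infty}f(x_n)$ holds for every sequence $(x_n)$ in $X$ which has no constant subsequence and converges to $x$. 2. $f$ is lower semicontinuous on $X$ if and only if it is nearly lower semicontinuous on $X$ and $d$-monotone. 3. If the topology $\tau_d$ is $T_1$, then every nearly lower semicontinuous function $f:X\to\mathbb{R}\cup\{\infty\}$ is lower semicontinuous.
   Context: A quasi-pseudometric on a set $X$ is a map $d:X\times X\to[0,\infty)$ with $d(x,x)=0$ and $d(x,z)\le d(x,y)+d(y,z)$ for all $x,y,z$ (symmetry is not assumed). The topology $\tau_d$ has as neighbourhood base at $x$ the balls $B_d(x,r)=\{y: d(x,y)<r\}$, $r>0$; thus $x_n\to x$ iff $d(x,x_n)\to0$. All topological notions refer to $\tau_d$. A function $f:X\to\mathbb{R}\cup\{\infty\}$ is lower semicontinuous (lsc) at $x$ if $f(x)\le\liminf_n f(x_n)$ for every sequence $x_n\to x$; nearly lsc at $x$ if this inequality holds for every sequence with pairwise distinct terms converging to $x$; lsc (nearly lsc) on $X$ if it is so at every point. $f$ is $d$-monotone if $d(x,y)=0$ implies $f(x)\le f(y)$. *)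

(* Defs.v *)
From HB Require Import structures.
From mathcomp Require Import all_boot all_order all_algebra.
From mathcomp Require Import all_classical all_reals all_analysis.
Set Implicit Arguments. Unset Strict Implicit. Unset Printing Implicit Defensive.
Import Order.TTheory GRing.Theory Num.Theory.
Local Open Scope ring_scope.
Local Open Scope classical_set_scope.

Section QPM.
Variables (R : realType) (X : Type) (d : X -> X -> R).

Definition quasi_pseudometric : Prop :=
  (forall x y, 0 <= d x y) /\ (forall x, d x x = 0) /\
  (forall x y z, d x z <= d x y + d y z).

Definition qball (x : X) (r : R) : set X := [set y | d x y < r].

Definition qopen (U : set X) : Prop :=
  forall x, U x -> exists2 r : R, 0 < r & qball x r `<=` U.

Definition qT1 : Prop :=
  forall x y : X, x <> y -> exists U, qopen U /\ U x /\ ~ U y.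

Definition qconv (u : nat -> X) (x : X) : Prop :=
  forall e : R, 0 < e -> exists N : nat, forall n, (N <= n)%N -> d x (u n) < e.

Definition lsc_at (f : X -> \bar R) (x : X) : Prop :=
  forall u : nat -> X, qconv u x -> (f x <= limn_einf (fun n => f (u n)))%E.

Definition nearly_lsc_at (f : X -> \bar R) (x : X) : Prop :=
  forall u : nat -> X, injective u -> qconv u x ->
    (f x <= limn_einf (fun n => f (u n)))%E.

Definition lsc (f : X -> \bar R) : Prop := forall x, lsc_at f x.
Definition nearly_lsc (f : X -> \bar R) : Prop := forall x, nearly_lsc_at f x.

Definition d_monotone (f : X -> \bar R) : Prop :=
  forall x y, d x y = 0 -> (f x <= f y)%E.

Definition no_constant_subseq (u : nat -> X) : Prop :=
  ~ exists (phi : nat -> nat) (c : X),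
      (forall n, (phi n < phi n.+1)%N) /\ (forall n, u (phi n) = c).

End QPM.

(* Main.v *)
Require Import Defs.
From HB Require Import structures.
From mathcomp Require Import all_boot all_order all_algebra.
From mathcomp Require Import all_classical all_reals all_analysis.
Import Order.TTheory GRing.Theory Num.Theory.
Local Open Scope ring_scope.

Lemma ge_fin (R : realType) (c l : \bar R) :
  (forall a : R, (a%:E < c)%E -> (a%:E <= l)%E) -> (c <= l)%E.
Proof.
case: c => [r| |] H; last by rewrite leNye.
- case: l H => [s| |] H; last first.
  + by have := H (r - 1); rewrite lte_fin ltrBlDr ltrDl ltr01 => /(_ isT).
  + by rewrite leey.
  rewrite lee_fin leNgt; apply/negP => sr.
  have := H ((s + r) / 2); rewrite lte_fin lee_fin.
  have [h1 h2] := midf_lt sr.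
  by rewrite h2 => /(_ isT); rewrite leNgt h1.
- case: l H => [s| |] H; last first.
  + by have := H 0; rewrite ltey => /(_ isT).
  + by [].
  by have := H (s + 1); rewrite ltey lee_fin => /(_ isT); rewrite gerDl ler10.
Qed.

Lemma liminf_ge (R : realType) (g : nat -> \bar R) (c : \bar R) :
  (forall a : R, (a%:E < c)%E -> exists N, forall n, (N <= n)%N -> (a%:E < g n)%E) ->
  (c <= limn_einf g)%E.
Proof.
move=> H; apply: ge_fin => a /H [N HN].
rewrite limn_einf_lim; apply: lime_ge; first exact: is_cvg_einfs.
exists N => // m /= Nm.
apply: le_ereal_inf_tmp => _ [k /= mk <-].
apply/ltW/HN; exact: leq_trans mk.
Qed.

Lemma liminf_le (R : realType) (g : nat -> \bar R) (a : \bar R) :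
  (forall n, (g n <= a)%E) -> (limn_einf g <= a)%E.
Proof.
move=> H; rewrite limn_einf_lim; apply: lime_le; first exact: is_cvg_einfs.
near=> m.
apply: le_trans (H m).
by apply: ereal_inf_lbound; exists m => /=.
Unshelve. all: by end_near.
Qed.

Definition IO (P : nat -> Prop) := forall N, exists n, (N <= n)%N /\ P n.

Lemma extract (P : nat -> Prop) : IO P ->
  exists phi : nat -> nat, (forall k, (phi k < phi k.+1)%N) /\ forall k, P (phi k).
Proof.
move=> /choice [g Hg].
exists (fun k => iter k (fun m => g m.+1) (g 0%N)); split.
- by move=> k /=; exact: (proj1 (Hg _)).
- by case=> [|k] /=; exact: (proj2 (Hg _)).
Qed.

Lemma incr_ge (phi : nat -> nat) : (forall k, (phi k < phi k.+1)%N) ->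
  forall k, (k <= phi k)%N.
Proof.
move=> H; elim=> [//|k IH]; exact: leq_ltn_trans IH (H k).
Qed.

Lemma dich (X : Type) (u : nat -> X) (P : nat -> Prop) : IO P ->
  (exists y, IO (fun n => P n /\ u n = y)) \/
  exists phi : nat -> nat, (forall k, (phi k < phi k.+1)%N) /\
     (forall k, P (phi k)) /\ injective (u \o phi).
Proof.
move=> HP; case: (pselect (exists y, IO (fun n => P n /\ u n = y))) => [h|h]; [by left|right].
have : forall y, exists N, forall n, (N <= n)%N -> P n -> u n <> y.
  move=> y; apply: contrapT => hn; apply: h; exists y => N.
  apply: contrapT => hN; apply: hn; exists N => n Nn Pn E; apply: hN; exists n; by split.
move=> /choice [Ny HNy].
move: HP => /choice [g Hg].
pose fix Q k := match k with 0 => 0%N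
  | k.+1 => maxn (Q k) (maxn (g (Q k)).+1 (Ny (u (g (Q k))))) end.
have Qmono : forall i j, (i <= j)%N -> (Q i <= Q j)%N.
  move=> i j /subnK <-; elim: (j - i)%N => [//|k IH].
  rewrite addSn /=; exact: leq_trans IH (leq_maxl _ _).
have Q1 : forall k, (g (Q k) < Q k.+1)%N.
  by move=> k /=; rewrite leq_max; apply/orP; right; rewrite leq_max leqnn.
have Q2 : forall k, (Ny (u (g (Q k))) <= Q k.+1)%N.
  by move=> k /=; rewrite leq_max; apply/orP; right; rewrite leq_max leqnn orbT.
exists (fun k => g (Q k)); split; [|split].
- move=> k; apply: leq_trans (Q1 k) _; exact: (proj1 (Hg _)).
- by move=> k; exact: (proj2 (Hg _)).
- have key : forall i j, (i < j)%N -> u (g (Q i)) <> u (g (Q j)).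
    move=> i j ij E.
    have [Hj1 Hj2] := Hg (Q j).
    apply: (HNy (u (g (Q i))) (g (Q j))) => //.
    apply: leq_trans (Q2 i) _; apply: leq_trans Hj1.
    exact: Qmono.
  move=> i j /= E; case: (ltngtP i j) => // ij.
  + by case: (key _ _ ij).
  + by case: (key _ _ ij).
Qed.

Lemma qconv_sub (R : realType) (X : Type) (d : X -> X -> R) u x (phi : nat -> nat) :
  (forall k, (phi k < phi k.+1)%N) -> qconv d u x -> qconv d (u \o phi) x.
Proof.
move=> Hphi H e e0; have [N HN] := H e e0; exists N => n Nn /=.
exact: (HN _ (leq_trans Nn (@incr_ge phi Hphi n))).
Qed.

Lemma not_ev (R : realType) (g : nat -> \bar R) (a : R) :
  ~ (exists N, forall n, (N <= n)%N -> (a%:E < g n)%E) ->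
  IO (fun n => (g n <= a%:E)%E).
Proof.
move=> hn N; apply: contrapT => hN; apply: hn; exists N => n Nn.
rewrite ltNge; apply/negP => le; apply: hN; exists n; by split.
Qed.

Arguments extract {P}.
Arguments dich {X u P}.
Arguments qconv_sub {R X d u x phi}.
Arguments liminf_le {R g}.
Arguments liminf_ge {R g c}.
Arguments not_ev {R g a}.

Lemma part2_back (R : realType) (X : Type) (d : X -> X -> R) (f : X -> \bar R) :
  quasi_pseudometric d -> nearly_lsc d f -> d_monotone d f -> lsc d f.
Proof.
move=> [d0 _] Hn Hm x u Hu; apply: liminf_ge => a ax.
apply: contrapT => /not_ev HIO.
case: (@dich _ u _ HIO) => [[y Hy]|[phi [Hphi [HP Hinj]]]].
- have dxy : d x y = 0.
    apply/eqP; rewrite eq_le d0 andbT; apply/ler_addgt0Pr => e e0; rewrite add0r.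
    have [N HN] := Hu e e0; have [n [Nn [_ <-]]] := Hy N.
    exact/ltW/HN.
  have [n [_ [Pn E]]] := Hy 0%N.
  have h : (f x <= a%:E)%E by apply: le_trans (Hm _ _ dxy) _; rewrite -E.
  by have := lt_le_trans ax h; rewrite ltxx.
- have := Hn x (u \o phi) Hinj (qconv_sub Hphi Hu).
  move=> /le_trans /(_ (liminf_le (a%:E) HP)) => h.
  by have := lt_le_trans ax h; rewrite ltxx.
Qed.

Theorem proposition2p11 (R : realType) (X : Type) (d : X -> X -> R) :
  quasi_pseudometric d ->
  (* 1 *)
  (forall (f : X -> \bar R), (forall x, f x <> -oo%E) ->
     forall x : X,
       nearly_lsc_at d f x <->
       (forall u : nat -> X, no_constant_subseq u -> qconv d u x ->
          (f x <= limn_einf (fun n => f (u n)))%E)) /\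
  (* 2 *)
  (forall (f : X -> \bar R), (forall x, f x <> -oo%E) ->
     lsc d f <-> (nearly_lsc d f /\ d_monotone d f)) /\
  (* 3 *)
  (qT1 d -> forall (f : X -> \bar R), (forall x, f x <> -oo%E) ->
     nearly_lsc d f -> lsc d f).
Proof.
move=> qpm; split; [|split].
- move=> f _ x; split.
  + move=> Hn u Hnc Hu; apply: liminf_ge => a ax.
    apply: contrapT => /not_ev HIO.
    case: (@dich _ u _ HIO) => [[y Hy]|[phi [Hphi [HP Hinj]]]].
    * apply: Hnc.
      have Hy' : IO (fun n => u n = y) by move=> N; have [n [Nn [_ E]]] := Hy N; exists n.
      have [phi [Hphi HP]] := extract Hy'.
      by exists phi, y.
    * have := Hn (u \o phi) Hinj (qconv_sub Hphi Hu).
      move=> /le_trans /(_ (liminf_le (a%:E) HP)) => h.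
      by have := lt_le_trans ax h; rewrite ltxx.
  + move=> H u Hinj Hu; apply: H => //.
    move=> [phi [c [Hphi E]]].
    have := Hinj _ _ (etrans (E 0%N) (esym (E 1%N))).
    by move=> h; have := Hphi 0%N; rewrite h ltnn.
- move=> f _; split.
  + move=> H; split.
    * by move=> x u _ Hu; apply: H.
    * move=> x y dxy.
      have := H x (fun _ => y).
      have Hc : qconv d (fun _ => y) x by move=> e e0; exists 0%N => n _; rewrite dxy.
      move=> /(_ Hc) /le_trans; apply; exact: liminf_le.
  + by move=> [Hn Hm]; apply: part2_back.
- move=> T1 f _ Hn; apply: part2_back => // x y dxy.
  case: (pselect (x = y)) => [->//|ne].
  have [U [oU [Ux Uy]]] := T1 x y ne.
  have [r r0 hr] := oU x Ux.
  by exfalso; apply: Uy; apply: hr; rewrite /qball /= dxy.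
Qed.
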